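(* Let $0<\beta<1$, $p=\lceil\beta^{-1}\rceil-1$, and let $t$ be an integer with $2\le t\le p$. Let $G$ be a graph of order $n$ with minimum degree $(1-\beta)n$. Then $$\sum_{S\in\mathcal{K}_{t+1}}\widetilde D(S)\le\big(t-1+(p-2t+2)(t+1)\beta\big)k_{t+1}+(t-1)\sum_{S\in\mathcal{K}_{t+1}}D_+(S)-(1-t\beta)(p-t+1)\beta n k_t-(t-1)(t+2)\frac{k_{t+2}}{n}-(1-t\beta)n\sum_{T\in\mathcal{K}_t}D_+(T).$$ Moreover, equality holds if and only if for each $T\in\mathcal{K}_t$, either $D_-(T)=1-t\beta$ or $D_-(T)=(p-t+1)\beta$.
   Context: All graphs are finite and simple. For a graph $G$, $\mathcal{K}_t$ denotes the set of $t$-cliques of $G$ (identified with their vertex sets) and $k_t=|\mathcal{K}_t|$; for a clique $S$, $\mathcal{K}_t(S)$ is the set of $t$-cliques contained in $S$. The degree $d(T)$ of a $t$-clique $T$ is the number of $(t+1)$-cliques containing $T$, and $D(T)=d(T)/n$. For $0<\beta<1$ with $p=\lceil\beta^{-1}\rceil-1$, and $T\in\mathcal{K}_t$ with $1\le t\le p+1$, define $D_-(T)=\min\{D(T),(p-t+1)\beta\}$ and $D_+(T)=D(T)-D_-(T)$. For $2\le t\le p$ and $S\in\mathcal{K}_{t+1}$, define $\widetilde D(S)=\sum_{T\in\mathcal{K}_t(S)}D_-(T)-\big(2-(t+1)\beta+(t-1)D_-(S)\big)$. *)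

(* Defs.v *)
From HB Require Import structures.
From mathcomp Require Import all_boot all_order all_algebra.
Set Implicit Arguments. Unset Strict Implicit. Unset Printing Implicit Defensive.
Import Order.TTheory GRing.Theory Num.Theory.
Local Open Scope ring_scope.

Section CliqueDefs.
Variables (V : finType) (e : rel V).

Definition is_clique (S : {set V}) : bool :=
  [forall x in S, forall y in S, (x != y) ==> e x y].

Definition cliques (t : nat) : {set {set V}} :=
  [set S : {set V} | is_clique S && (#|S| == t)].

Definition kcount (t : nat) : nat := #|cliques t|.

Definition vdeg (v : V) : nat := #|[set w | e v w]|.

Definition cdeg (S : {set V}) : nat :=
  #|[set S' in cliques #|S|.+1 | S \subset S']|.

Variable R : archiRealFieldType.
Variables (beta : R) (p : nat).

Definition Dn (S : {set V}) : R := (cdeg S)%:R / #|V|%:R.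

(* D_-(T) = min{D(T), (p - t + 1) beta}, t = |T| (used for 1 <= t <= p+1) *)
Definition Dminus (S : {set V}) : R :=
  Num.min (Dn S) ((p.+1 - #|S|)%N%:R * beta).

Definition Dplus (S : {set V}) : R := Dn S - Dminus S.

Definition Dtilde (t : nat) (S : {set V}) : R :=
  \sum_(T in cliques t | T \subset S) Dminus T
  - (2 - (t.+1)%:R * beta + (t%:R - 1) * Dminus S).

End CliqueDefs.

(* Main.v *)
Require Import Defs.
From HB Require Import structures.
From mathcomp Require Import all_boot all_order all_algebra.
From Stdlib Require Import Ring.
Import Order.TTheory GRing.Theory Num.Theory.
Set Implicit Arguments. Unset Strict Implicit.

Section Comb.
Variables (V : finType) (e : rel V).
Hypotheses (e_sym : symmetric e) (e_irr : irreflexive e).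

Lemma clique_sub (S T : {set V}) : is_clique e S -> T \subset S -> is_clique e T.
Proof.
move=> /forallP cS sTS; apply/forallP=> x; apply/implyP=> xT.
apply/forallP=> y; apply/implyP=> yT.
have:= cS x; rewrite (subsetP sTS x xT) /= => /forallP/(_ y).
by rewrite (subsetP sTS y yT).
Qed.

Lemma card_sub_cliques k (S : {set V}) : S \in cliques e k.+1 ->
  #|[set T in cliques e k | T \subset S]| = k.+1.
Proof.
rewrite inE => /andP[cS /eqP cardS].
rewrite -[RHS]binSn -cardS -cards_draws; apply: eq_card => T; rewrite !inE.
case sTS: (T \subset S); rewrite ?andbF ?andbT //=.
by rewrite (clique_sub cS sTS).
Qed.

Definition cnb (T : {set V}) := [set w | [forall v in T, e v w]].

Lemma cnb_le_cdeg k (T : {set V}) : T \in cliques e k -> (#|cnb T| <= cdeg e T)%N.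
Proof.
rewrite inE => /andP[cT /eqP cardT].
have wT : forall w, w \in cnb T -> w \notin T.
  move=> w; rewrite inE => /forallP/(_ w) H; apply/negP => wT.
  by move: H; rewrite wT /= e_irr.
rewrite /cdeg -(@card_in_imset _ _ (fun w => w |: T) (mem (cnb T))); last first.
  move=> w1 w2 w1N w2N /= eqw.
  have : w1 \in w2 |: T by rewrite -eqw setU11.
  by rewrite in_setU1 (negbTE (wT w1 w1N)) orbF => /eqP.
apply: subset_leq_card; apply/subsetP => _ /imsetP[w wN ->].
rewrite !inE subsetUr andbT cardsU1 (wT w wN) cardT eqxx andbT.
move: wN; rewrite inE => /forallP wN.
apply/forallP=> x; apply/implyP; rewrite in_setU1 => xU.
apply/forallP=> y; apply/implyP; rewrite in_setU1 => yU.
case/orP: xU => [/eqP -> | xT]; case/orP: yU => [/eqP -> | yT].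
- by rewrite eqxx.
- by rewrite e_sym; move: (wN y); rewrite yT /= => ->; rewrite implybT.
- by move: (wN x); rewrite xT /= => ->; rewrite implybT.
- by move/forallP: cT => /(_ x); rewrite xT => /forallP/(_ y); rewrite yT.
Qed.

Lemma compl_cnb_le (T : {set V}) :
  (#|~: cnb T| <= \sum_(v in T) #|[set w | ~~ e v w]|)%N.
Proof.
rewrite -sum1_card.
apply: (@leq_trans (\sum_(w in ~: cnb T) \sum_(v in T) (~~ e v w : nat))).
  apply: leq_sum => w; rewrite !inE => /forallPn[v].
  rewrite negb_imply => /andP[vT nev].
  by rewrite (bigD1 v) //= nev.
apply: (@leq_trans (\sum_(w : V) \sum_(v in T) (~~ e v w : nat))).
  by rewrite [X in (_ <= X)%N](bigID (mem (~: cnb T))) /= leq_addr.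
rewrite exchange_big /=; apply: leq_sum => v _.
rewrite -sum1_card [X in (_ <= X)%N]big_mkcond /=; apply: leq_sum => w _.
by rewrite inE; case: (~~ e v w).
Qed.

End Comb.

Local Open Scope ring_scope.

Section Alg.
Variable R : archiRealFieldType.

Lemma RT : @ring_theory (Algebra.BaseAddMagma.sort R) 0 1 +%R *%R (fun x y => x - y) -%R eq.
Proof.
split=> //=; [exact: add0r|exact: addrC|exact: addrA|exact: mul1r|exact: mulrC|exact: mulrA|exact: mulrDl|exact: subrr].
Qed.
Add Ring RR : RT.
Lemma addE : @Algebra.add (GRing_PzSemiRing__to__Algebra_BaseAddMagma (Num_ArchiRealField__to__GRing_PzSemiRing R)) = @Algebra.add (Num_ArchiRealField__to__Algebra_BaseAddMagma R).
Proof. by []. Qed.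
Lemma oppE : @Algebra.opp (GRing_PzRing__to__Algebra_BaseZmodule (Num_ArchiRealField__to__GRing_PzRing R)) = @Algebra.opp (Num_ArchiRealField__to__Algebra_BaseZmodule R).
Proof. by []. Qed.
Lemma oneE : GRing.one (join_GRing_PzRing_between_Algebra_BaseZmodule_and_GRing_PzSemiRing (Num_ArchiRealField__to__GRing_PzRing R)) = GRing.one (Num_ArchiRealField__to__GRing_PzSemiRing R).
Proof. by []. Qed.
Lemma mulE : @GRing.mul (join_GRing_PzRing_between_Algebra_BaseZmodule_and_GRing_PzSemiRing (Num_ArchiRealField__to__GRing_PzRing R)) = @GRing.mul (Num_ArchiRealField__to__GRing_PzSemiRing R).
Proof. by []. Qed.
Lemma zeroE : @Algebra.zero (GRing_PzSemiRing__to__Algebra_BaseAddUMagma (Num_ArchiRealField__to__GRing_PzSemiRing R)) = @Algebra.zero (Num_ArchiRealField__to__Algebra_BaseAddUMagma R).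
Proof. by []. Qed.
Lemma natmulE : @Algebra.natmul (GRing_PzSemiRing__to__Algebra_BaseAddUMagma (join_GRing_PzRing_between_Algebra_BaseZmodule_and_GRing_PzSemiRing (Num_ArchiRealField__to__GRing_PzRing R))) = @Algebra.natmul (GRing_PzSemiRing__to__Algebra_BaseAddUMagma (Num_ArchiRealField__to__GRing_PzSemiRing R)).
Proof. by []. Qed.
Lemma ringE (x y : R) : @eq (Algebra.BaseAddMagma.sort (Num_ArchiRealField__to__Algebra_BaseAddMagma R)) (@Algebra.add (Num_ArchiRealField__to__Algebra_BaseAddMagma R) x (@Algebra.opp (Num_ArchiRealField__to__Algebra_BaseZmodule R) y)) (@Algebra.zero (Num_ArchiRealField__to__Algebra_BaseAddUMagma R)) -> x = y.
Proof. by move/eqP; rewrite subr_eq0 => /eqP. Qed.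
Ltac rring := apply: ringE; rewrite ?addE ?oppE ?oneE ?mulE ?zeroE ?natmulE; ring.

Variables (V : finType) (e : rel V).

Lemma sum_pred_const (A : {set {set V}}) (P : pred {set V}) (c : R) :
  \sum_(x in A | P x) c = c *+ #|[set x in A | P x]|.
Proof. by rewrite -sumr_const; apply: eq_bigl => x; rewrite inE. Qed.

Lemma dcount k (f : {set V} -> R) :
  \sum_(S in cliques e k.+1) \sum_(T in cliques e k | T \subset S) f T
  = \sum_(T in cliques e k) (cdeg e T)%:R * f T.
Proof.
under eq_bigr => S _ do rewrite big_mkcondr.
rewrite exchange_big /=; apply: eq_bigr => T Tk.
rewrite -big_mkcondr sum_pred_const -mulr_natl /cdeg.
move: Tk; rewrite inE => /andP[_ /eqP ->]; by rewrite mulr1 mulr_natl.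
Qed.

Lemma sum_cdeg k : \sum_(T in cliques e k) (cdeg e T)%:R = (k.+1 * kcount e k.+1)%:R :> R.
Proof.
have := dcount k (fun _ => 1 : R).
under [in X in X = _ -> _]eq_bigr => S HS do rewrite sum_pred_const (card_sub_cliques HS).
under [in X in _ = X -> _]eq_bigr => T _ do rewrite mulr1.
by move=> <-; rewrite sumr_const natrM mulr_natr.
Qed.

Lemma cdeg_lb (beta : R) t (T : {set V}) : symmetric e -> irreflexive e ->
  (forall v, (1 - beta) * #|V|%:R <= (vdeg e v)%:R) -> T \in cliques e t ->
  (1 - t%:R * beta) * #|V|%:R <= (cdeg e T)%:R.
Proof.
move=> es ei hmin Tk.
have h1 := cnb_le_cdeg es ei Tk.
have h2 := compl_cnb_le e T.
have hc := cardsC (cnb e T).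
set n : R := #|V|%:R.
have hT : #|T| = t by move: Tk; rewrite inE => /andP[_ /eqP].
have Cv : forall v, (#|[set w | ~~ e v w]|%:R : R) = n - (vdeg e v)%:R.
  move=> v; have := cardsC [set w | e v w].
  have -> : ~: [set w | e v w] = [set w | ~~ e v w] by apply/setP=> w; rewrite !inE.
  by move=> H; rewrite /n -H natrD /vdeg; rring.
have e1 : (#|cnb e T|%:R : R) = n - #|~: cnb e T|%:R by rewrite /n -hc natrD; rring.
have e2 : (#|~: cnb e T|%:R : R) <= \sum_(v in T) (n - (vdeg e v)%:R).
  by rewrite -(eq_bigr _ (fun v _ => Cv v)) -natr_sum ler_nat.
have e3 : \sum_(v in T) (n - (vdeg e v)%:R) <= t%:R * beta * n.
  have : \sum_(v in T) (n - (vdeg e v)%:R) <= \sum_(v in T) (beta * n).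
    apply: ler_sum => v _; rewrite -subr_ge0.
    have : 0 <= (vdeg e v)%:R - (1 - beta) * n by rewrite subr_ge0; exact: hmin.
    suff -> : beta * n - (n - (vdeg e v)%:R) = (vdeg e v)%:R - (1 - beta) * n by [].
    rring.
  by rewrite sumr_const hT -[beta * n *+ t]mulr_natl mulrA.
have e4 : (#|cnb e T|%:R : R) <= (cdeg e T)%:R by rewrite ler_nat.
rewrite -subr_ge0.
have : 0 <= ((cdeg e T)%:R - #|cnb e T|%:R) + (t%:R * beta * n - \sum_(v in T) (n - (vdeg e v)%:R))
   + (\sum_(v in T) (n - (vdeg e v)%:R) - #|~: cnb e T|%:R).
  by apply: addr_ge0; [apply: addr_ge0|]; rewrite subr_ge0.
suff -> : (cdeg e T)%:R - (1 - t%:R * beta) * n = ((cdeg e T)%:R - #|cnb e T|%:R) + (t%:R * beta * n - \sum_(v in T) (n - (vdeg e v)%:R))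
   + (\sum_(v in T) (n - (vdeg e v)%:R) - #|~: cnb e T|%:R) by [].
rewrite e1; rring.
Qed.


Lemma sum_lin (A : {set {set V}}) (X Y Z : {set V} -> R) (c1 c2 c3 c4 : R) :
  \sum_(i in A) (- (c1 * X i) + c2 * Y i - c3 * Z i - c4) =
  - (c1 * \sum_(i in A) X i) + c2 * \sum_(i in A) Y i - c3 * \sum_(i in A) Z i
  - c4 * #|A|%:R.
Proof.
by rewrite !sumrB big_split /= sumrN -!mulr_sumr sumr_const mulr_natr.
Qed.

Lemma sum_lin2 (A : {set {set V}}) (X Y : {set V} -> R) (c d : R) :
  \sum_(i in A) (X i - (c + d * Y i)) =
  \sum_(i in A) X i - c * #|A|%:R - d * \sum_(i in A) Y i.
Proof.
by rewrite sumrB big_split /= sumr_const -mulr_sumr mulr_natr opprD addrA.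
Qed.

Lemma sum_lin3 (A : {set {set V}}) (X Y : {set V} -> R) :
  \sum_(i in A) X i = \sum_(i in A) Y i - \sum_(i in A) (Y i - X i).
Proof. by rewrite sumrB opprB addrC subrK. Qed.

Lemma main_sec (beta : R) (p t : nat)
  (e_sym : symmetric e) (e_irr : irreflexive e)
  (hbeta0 : 0 < beta) (hbeta1 : beta < 1)
  (hp : (p%:Z = Num.ceil (beta^-1) - 1)%R)
  (ht2 : (2 <= t)%N) (htp : (t <= p)%N)
  (hmin_ge : forall v : V, (1 - beta) * #|V|%:R <= (vdeg e v)%:R)
  (hmin_eq : exists v : V, (vdeg e v)%:R = (1 - beta) * #|V|%:R) :
  let n : R := #|V|%:R in
  let LHS := \sum_(S in cliques e t.+1) Dtilde e beta p t S in
  let RHS :=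
    (t%:R - 1 + (p%:R - 2 * t%:R + 2) * t.+1%:R * beta) * (kcount e t.+1)%:R
    + (t%:R - 1) * \sum_(S in cliques e t.+1) Dplus e beta p S
    - (1 - t%:R * beta) * (p%:R - t%:R + 1) * beta * n * (kcount e t)%:R
    - (t%:R - 1) * (t%:R + 2) * ((kcount e t.+2)%:R / n)
    - (1 - t%:R * beta) * n * \sum_(T in cliques e t) Dplus e beta p T in
  LHS <= RHS /\
  (LHS = RHS <->
   (forall T, T \in cliques e t ->
      Dminus e beta p T = 1 - t%:R * beta \/
      Dminus e beta p T = (p%:R - t%:R + 1) * beta)).
Proof.
cbv zeta.
pose n : R := #|V|%:R.
pose a : R := 1 - t%:R * beta.
pose b : R := (p%:R - t%:R + 1) * beta.
have hn : 0 < n.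
  case: hmin_eq => v _; rewrite /n ltr0n; apply/card_gt0P; by exists v.
have hn0 : n != 0 by rewrite gt_eqF.
have hab : a <= b.
  have h1 : 1 <= (p%:R + 1) * beta.
    have := ceil_ge (beta^-1).
    have -> : Num.ceil (beta^-1) = p%:Z + 1 by rewrite hp subrK.
    rewrite intrD => h; rewrite -(ler_pM2r hbeta0) mulVf ?gt_eqF // in h.
  rewrite /a /b -subr_ge0.
  suff -> : (p%:R - t%:R + 1) * beta - (1 - t%:R * beta) = (p%:R + 1) * beta - 1 by rewrite subr_ge0.
  rring.
have hDmT : forall T, T \in cliques e t -> Dminus e beta p T = Num.min (Dn e R T) b.
  move=> T; rewrite inE => /andP[_ /eqP cT]; rewrite /Dminus cT natrB; last exact: leqW.
  by rewrite /b -natr1; congr (Num.min _ (_ * _)); rring.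
have hDn : forall T, (cdeg e T)%:R = n * Dn e R T.
  by move=> T; rewrite /Dn mulrC divfK.
have hlo : forall T, T \in cliques e t -> a <= Dn e R T.
  by move=> T Tk; rewrite /Dn ler_pdivlMr //; apply: cdeg_lb.
have hx : forall T, T \in cliques e t -> a <= Dminus e beta p T <= b.
  move=> T Tk; rewrite hDmT // le_min ge_min lexx orbT hab hlo //.
have hPx : forall T, T \in cliques e t -> Dplus e beta p T * Dminus e beta p T = b * Dplus e beta p T.
  move=> T Tk; rewrite /Dplus hDmT //.
  have [h|h] := leP (Dn e R T) b.
    by rewrite subrr mul0r mulr0.
  by rewrite mulrC.
pose Q T := (Dminus e beta p T - a) * (b - Dminus e beta p T).
have hQ : forall T, T \in cliques e t -> 0 <= Q T.
  move=> T /hx /andP[h1 h2]; rewrite /Q mulr_ge0 // subr_ge0 //.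
have hT : forall T, T \in cliques e t -> (cdeg e T)%:R * Dminus e beta p T =
   - (n * Q T) + (a + b) * (cdeg e T)%:R - n * a * Dplus e beta p T - n * a * b.
  move=> T Tk; rewrite !hDn.
  have hD : Dn e R T = Dminus e beta p T + Dplus e beta p T by rewrite /Dplus; rring.
  rewrite hD; apply/eqP; rewrite -subr_eq0; apply/eqP.
  transitivity (n * (Dplus e beta p T * Dminus e beta p T - b * Dplus e beta p T)).
    rewrite /Q; rring.
  by rewrite hPx // subrr mulr0.
have sumT : \sum_(T in cliques e t) (cdeg e T)%:R * Dminus e beta p T =
   - (n * \sum_(T in cliques e t) Q T) + (a + b) * (t.+1 * kcount e t.+1)%:R
   - n * a * \sum_(T in cliques e t) Dplus e beta p T - n * a * b * (kcount e t)%:R.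
  rewrite (eq_bigr _ hT).
  by rewrite (sum_lin _ Q (fun T => (cdeg e T)%:R) (Dplus e beta p)) sum_cdeg.
have sumS : \sum_(S in cliques e t.+1) Dminus e beta p S =
    (t.+2 * kcount e t.+2)%:R / n - \sum_(S in cliques e t.+1) Dplus e beta p S.
  rewrite (sum_lin3 _ _ (Dn e R)) /Dn -mulr_suml sum_cdeg.
  by [].
have hL : \sum_(S in cliques e t.+1) Dtilde e beta p t S =
   \sum_(T in cliques e t) (cdeg e T)%:R * Dminus e beta p T
   - (2 - t.+1%:R * beta) * (kcount e t.+1)%:R
   - (t%:R - 1) * \sum_(S in cliques e t.+1) Dminus e beta p S.
  rewrite /Dtilde.
  rewrite (sum_lin2 _ (fun S => \sum_(T in cliques e t | T \subset S) Dminus e beta p T) (Dminus e beta p)).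
  by rewrite dcount.
have key : \sum_(S in cliques e t.+1) Dtilde e beta p t S = ((t%:R - 1 + (p%:R - 2 * t%:R + 2) * t.+1%:R * beta) * (kcount e t.+1)%:R
    + (t%:R - 1) * \sum_(S in cliques e t.+1) Dplus e beta p S
    - (1 - t%:R * beta) * (p%:R - t%:R + 1) * beta * n * (kcount e t)%:R
    - (t%:R - 1) * (t%:R + 2) * ((kcount e t.+2)%:R / n)
    - (1 - t%:R * beta) * n * \sum_(T in cliques e t) Dplus e beta p T) - n * \sum_(T in cliques e t) Q T.
  rewrite hL sumT sumS /a /b /n !natrM -!natr1 ?mulr0n.
  rring.
have hS : 0 <= \sum_(T in cliques e t) Q T by apply: sumr_ge0.
rewrite key; split.
  by rewrite gerBl mulr_ge0 // ltW.
split.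
  move=> /eqP; rewrite -subr_eq0 addrAC subrr add0r oppr_eq0 mulf_eq0 (negbTE hn0) /=.
  move=> /eqP hs T Tk.
  have := psumr_eq0P hQ hs Tk; rewrite /Q => /eqP; rewrite mulf_eq0 !subr_eq0.
  by case/orP => /eqP h; [left; exact: h | right; exact: (esym h)].
move=> H; suff -> : \sum_(T in cliques e t) Q T = 0 by rewrite mulr0 subr0.
apply: big1 => T Tk; rewrite /Q.
by case: (H T Tk) => ->; rewrite subrr ?mul0r ?mulr0.
Qed.

End Alg.

Unset Implicit Arguments.

Theorem mainTheorem12 (R : archiRealFieldType) (beta : R) (p t : nat)
  (V : finType) (e : rel V)
  (e_sym : symmetric e) (e_irr : irreflexive e)
  (hbeta0 : 0 < beta) (hbeta1 : beta < 1)
  (hp : (p%:Z = Num.ceil (beta^-1) - 1)%R)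
  (ht2 : (2 <= t)%N) (htp : (t <= p)%N)
  (hmin_ge : forall v : V, (1 - beta) * #|V|%:R <= (vdeg e v)%:R)
  (hmin_eq : exists v : V, (vdeg e v)%:R = (1 - beta) * #|V|%:R) :
  let n : R := #|V|%:R in
  let LHS := \sum_(S in cliques e t.+1) Dtilde e beta p t S in
  let RHS :=
    (t%:R - 1 + (p%:R - 2 * t%:R + 2) * t.+1%:R * beta) * (kcount e t.+1)%:R
    + (t%:R - 1) * \sum_(S in cliques e t.+1) Dplus e beta p S
    - (1 - t%:R * beta) * (p%:R - t%:R + 1) * beta * n * (kcount e t)%:R
    - (t%:R - 1) * (t%:R + 2) * ((kcount e t.+2)%:R / n)
    - (1 - t%:R * beta) * n * \sum_(T in cliques e t) Dplus e beta p T in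
  LHS <= RHS /\
  (LHS = RHS <->
   (forall T, T \in cliques e t ->
      Dminus e beta p T = 1 - t%:R * beta \/
      Dminus e beta p T = (p%:R - t%:R + 1) * beta)).
Proof.
exact: (@main_sec R V e beta p t e_sym e_irr hbeta0 hbeta1 hp ht2 htp hmin_ge hmin_eq).
Qed.
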